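(* Let $G=(V,E)$ be a DAG and $ij\in E$. If $A\subseteq V$ is identifying for the edge $ij$, i.e. $\lambda_{ij|A}(\phi_G(\Omega,\Lambda))=\lambda_{ij}$ for all parameters $(\Omega,\Lambda)$, then $i\in A\subseteq V\setminus\overline{\mathrm{de}}(j)$.
   Context: $G=(V,E)$ is a DAG, edges $i\to j$ written $ij$; $\mathrm{de}(j)$ descendants of $j$ (excluding $j$), $\overline{\mathrm{de}}(j)=\{j\}\cup\mathrm{de}(j)$. Parameters: $\Omega=\mathrm{diag}(\omega_i)$ with $\omega_i>0$, $\Lambda=(\lambda_{ij})$ with $\lambda_{ij}=0$ for $ij\notin E$. $\phi_G(\Omega,\Lambda)=(I-\Lambda)^{-T}\Omega(I-\Lambda)^{-1}$. $\Sigma_A$ principal submatrix; for $K\subseteq V$ and $i,j$, $\Sigma_{ij|K}$ the submatrix with rows $(i,K)$ and columns $(j,K)$ (if $j\in K$ it has a repeated column); $\lambda_{ij|A}(\Sigma)=|\Sigma_{ij|A\setminus\{i\}}|/|\Sigma_A|$. *)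

(* Defs.v *)
From HB Require Import structures.
From mathcomp Require Import all_boot all_order all_algebra.
From mathcomp Require Import reals.
Set Implicit Arguments. Unset Strict Implicit. Unset Printing Implicit Defensive.
Import Order.TTheory GRing.Theory Num.Theory.
Local Open Scope ring_scope.

Definition de (n : nat) (e : rel 'I_n) (j : 'I_n) : {set 'I_n} :=
  [set k | [exists k', e j k' && connect e k' k]].

Definition debar (n : nat) (e : rel 'I_n) (j : 'I_n) : {set 'I_n} :=
  j |: de e j.

Definition is_dag (n : nat) (e : rel 'I_n) : Prop :=
  forall i : 'I_n, i \notin de e i.

Definition phiG (R : fieldType) (n : nat) (omega : 'I_n -> R) (L : 'M[R]_n)
  : 'M[R]_n :=
  (invmx (1%:M - L))^T *m diag_mx (\row_k omega k) *m invmx (1%:M - L).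

Definition subPrinc (R : ringType) (n : nat) (S : 'M[R]_n) (A : {set 'I_n})
  : 'M[R]_#|A| :=
  \matrix_(a < #|A|, b < #|A|) S (enum_val a) (enum_val b).

(* Sigma_{ij|K}: rows (i, K), columns (j, K), K ordered by enum K. *)
Definition subCond (R : ringType) (n : nat) (S : 'M[R]_n) (i j : 'I_n)
  (K : {set 'I_n}) : 'M[R]_(#|K|.+1) :=
  \matrix_(a < #|K|.+1, b < #|K|.+1)
     S (nth i (i :: enum K) a) (nth j (j :: enum K) b).

Definition lamA (R : fieldType) (n : nat) (i j : 'I_n) (A : {set 'I_n})
  (S : 'M[R]_n) : R :=
  \det (subCond S i j (A :\ i)) / \det (subPrinc S A).

(* Main.v *)
Require Import Defs.
From HB Require Import structures.
From mathcomp Require Import all_boot all_order all_algebra.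
From mathcomp Require Import reals.
From mathcomp Require Import ring lra.
Unset Printing Implicit Defensive.
Import Order.TTheory GRing.Theory Num.Theory.
Local Open Scope ring_scope.


Section Aux.
Variable R : fieldType.
Variable n : nat.

Definition Fm (S : 'M[R]_n) (i j : 'I_n) (K : {set 'I_n}) (c : 'cV[R]_(#|K|.+1))
  : 'M[R]_(#|K|.+1) :=
  \matrix_(a, b) if b == ord0 then c a ord0
                 else S (nth i (i :: enum K) a) (nth j (j :: enum K) b).

Definition colv (S : 'M[R]_n) (i : 'I_n) (K : {set 'I_n}) (k : 'I_n)
  : 'cV[R]_(#|K|.+1) := \col_a S (nth i (i :: enum K) a) k.

Lemma subCond_Fm S i j K : subCond S i j K = Fm S i j K (colv S i K j).
Proof.
apply/matrixP => a b; rewrite !mxE; case: eqP => [-> //|]; rewrite ?mxE //.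
Qed.

Lemma Fm_lin S i j K b g c1 c2 :
  \det (Fm S i j K (b *: c1 + g *: c2)) =
  b * \det (Fm S i j K c1) + g * \det (Fm S i j K c2).
Proof.
rewrite -det_tr -[\det (Fm _ _ _ _ c1)]det_tr -[\det (Fm _ _ _ _ c2)]det_tr.
apply: (determinant_multilinear (i0 := ord0)).
- by apply/rowP => k; rewrite !mxE eqxx /=.
- by apply/(@matrixP _ #|K| _) => a k; rewrite !mxE /=.
- by apply/(@matrixP _ #|K| _) => a k; rewrite !mxE /=.
Qed.

Lemma Fm_zero S i j (K : {set 'I_n}) k : k \in K -> \det (Fm S i j K (colv S i K k)) = 0.
Proof.
move=> kK.
have hk : ((index k (enum K)).+1 < #|K|.+1)%N.
  by rewrite ltnS cardE index_mem mem_enum.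
rewrite -det_tr; apply: (determinant_alternate (i1 := ord0) (i2 := Ordinal hk)).
  by rewrite -val_eqE.
by move=> a; rewrite !mxE /= nth_index ?mem_enum //.
Qed.

Lemma phiG_scale (a : R) (omega : 'I_n -> R) L :
  phiG (fun k => a * omega k) L = a *: phiG omega L.
Proof.
rewrite /phiG.
have -> : diag_mx (\row_k (a * omega k)) = a *: diag_mx (\row_k omega k).
  by apply/matrixP => u v; rewrite !mxE mulrnAr.
by rewrite -scalemxAr -scalemxAl.
Qed.

End Aux.
Arguments Fm {R n}.
Arguments colv {R n}.


Lemma sum_delta (R : pzRingType) n (F : 'I_n -> R) a :
  \sum_w F w * (w == a)%:R = F a.
Proof.
rewrite (bigD1 a) //= eqxx mulr1 big1 ?addr0 // => w /negbTE ->.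
by rewrite mulr0.
Qed.

Lemma sum_delta' (R : pzRingType) n (F : 'I_n -> R) a :
  \sum_w (w == a)%:R * F w = F a.
Proof.
rewrite (bigD1 a) //= eqxx mul1r big1 ?addr0 // => w /negbTE ->.
by rewrite mul0r.
Qed.

Section Chain.
Variable R : realType.
Variable n : nat.
Variable e : rel 'I_n.
Variables i j : 'I_n.
Variable p : seq 'I_n.
Hypothesis pth : path e i (j :: p).
Hypothesis uq : uniq (i :: j :: p).
Definition q : seq 'I_n := i :: j :: p.
Local Notation d := (last j p).
Hypothesis dj : d != j.

Lemma iq : i \in q. Proof. by rewrite /q mem_head. Qed.
Lemma jq : j \in q. Proof. by rewrite /q !inE eqxx orbT. Qed.
Lemma dq : d \in q. Proof. by rewrite /q inE mem_last orbT. Qed.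
Lemma ij : i != j.
Proof. by move: uq; rewrite /= inE negb_or => /andP [/andP [] ]. Qed.
Lemma di : d != i.
Proof.
by apply: contraTneq (mem_last j p) => ->; move: uq; rewrite cons_uniq => /andP[].
Qed.
Lemma idx_i : index i q = 0%N. Proof. by rewrite /q /= eqxx. Qed.
Lemma idx_j : index j q = 1%N. Proof. by rewrite /q /= (negbTE ij) eqxx. Qed.
Lemma nth_idx {u} : u \in q -> nth i q (index u q) = u.
Proof. exact: nth_index. Qed.
Lemma idx_nth k : (k < size q)%N -> index (nth i q k) q = k.
Proof. by move=> h; rewrite index_uniq. Qed.
Lemma idx_inj {u v} : u \in q -> v \in q -> (u == v) = (index u q == index v q).
Proof.
move=> uq' vq'; apply/eqP/eqP => [-> //|h].
by rewrite -(nth_idx uq') h nth_idx.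
Qed.
Lemma idx_d : index d q = (size q).-1.
Proof.
have -> : d = nth i q (size q).-1.
  by rewrite (last_nth j) /q /= (set_nth_default i) //=.
by rewrite idx_nth // /q /= ltnSn.
Qed.
Lemma idx_lt {u} : u \in q -> (index u q < size q)%N.
Proof. by rewrite index_mem. Qed.

Definition Lm : 'M[R]_n :=
  \matrix_(u, v) ((u \in q) && (v \in q) && (index v q == (index u q).+1))%:R.
Definition Bm : 'M[R]_n :=
  \matrix_(u, v) (if (u \in q) && (v \in q) then (index u q <= index v q)%N
                  else u == v)%:R.

Lemma Lm_valid k l : ~~ e k l -> Lm k l = 0.
Proof.
apply: contraNeq; rewrite mxE pnatr_eq0 eqb0 negbK => /andP [/andP [kq lq] /eqP h].
have hl := idx_lt lq; rewrite h in hl.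
have sq : size q = (size (j :: p)).+1 by [].
rewrite sq ltnS in hl.
move/pathP: pth => /(_ i (index k q) hl).
change (e (nth i q (index k q)) (nth i q (index k q).+1) -> e k l).
by rewrite -h !nth_idx.
Qed.

Lemma Lm_ij : Lm i j = 1.
Proof. by rewrite mxE iq jq idx_i idx_j. Qed.

Lemma Lm_row u w : Lm u w =
  ((u \in q) && ((index u q).+1 < size q)%N)%:R * (w == nth i q (index u q).+1)%:R.
Proof.
rewrite mxE -natrM mulnb; congr (_%:R); congr (nat_of_bool _).
apply/idP/idP.
- move=> /andP [/andP [uq' wq] /eqP h]; rewrite uq' -h (idx_lt wq) /=.
  by rewrite nth_idx.
- move=> /andP [/andP [uq' hs] /eqP ->]; by rewrite uq' mem_nth // idx_nth // eqxx.
Qed.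

Lemma Bm_inv : (1%:M - Lm) *m Bm = 1%:M.
Proof.
apply/matrixP => u v; rewrite mulmxBl mul1mx !mxE.
under eq_bigr => w _ do rewrite Lm_row -mulrA.
rewrite -mulr_sumr sum_delta' !mxE.
case uq': (u \in q); case vq': (v \in q); rewrite ?andbT ?andbF ?andTb ?andFb.
- case hs: ((index u q).+1 < size q)%N; rewrite ?mul1r ?mul0r ?subr0.
  + rewrite mem_nth // idx_nth // (idx_inj uq' vq').
    case: ltngtP => h.
    * by rewrite subrr.
    * by rewrite subrr.
    * by rewrite subr0.
  + rewrite (idx_inj uq' vq').
    have hv := idx_lt vq'.
    congr (_%:R); congr (nat_of_bool _); rewrite eqn_leq.
    apply/idP/idP => [->|/andP [] //]; rewrite andTb.
    by move: hs; rewrite ltnNge => /negbFE hs; rewrite -ltnS (leq_trans hv hs).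
- have -> : (u == v) = false by apply/negbTE; apply: contraFneq vq' => <-.
  case hs: ((index u q).+1 < size q)%N; rewrite ?mul0r ?mul1r ?subr0 //.
  have -> : (nth i q (index u q).+1 == v) = false.
    by apply/negbTE; apply: contraFneq vq' => <-; rewrite mem_nth.
  by rewrite subr0.
- by rewrite mul0r subr0.
- by rewrite mul0r subr0.
Qed.

Lemma invB : invmx (1%:M - Lm) = Bm.
Proof.
have [U _] := mulmx1_unit Bm_inv.
by have := mulKmx U Bm; rewrite Bm_inv mulmx1.
Qed.

Definition Sig (omega : 'I_n -> R) := locked (phiG omega Lm).
Lemma SigE omega : Sig omega = phiG omega Lm. Proof. by rewrite /Sig -lock. Qed.

Lemma Sig_entry omega u v :
  Sig omega u v = \sum_w Bm w u * omega w * Bm w v.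
Proof.
rewrite SigE /phiG invB mul_mx_diag !mxE; apply: eq_bigr => w _.
by rewrite !mxE.
Qed.

Lemma colI w : Bm w i = (w == i)%:R.
Proof.
rewrite mxE iq andbT; case wq: (w \in q) => //.
by rewrite idx_i leqn0 -idx_i -idx_inj ?iq.
Qed.

Lemma rowI v : Bm i v = (v \in q)%:R.
Proof.
rewrite mxE iq andTb; case vq: (v \in q); first by rewrite idx_i.
by apply/eqP; rewrite pnatr_eq0 eqb0; apply: contraFN vq => /eqP <-; exact: iq.
Qed.

Lemma colOut u w : u \notin q -> Bm w u = (w == u)%:R.
Proof. by move=> /negbTE uq'; rewrite mxE uq' andbF. Qed.

Lemma rowOut u w : u \notin q -> Bm u w = (u == w)%:R.
Proof. by move=> /negbTE uq'; rewrite mxE uq' andFb. Qed.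

Lemma colD w : Bm w d = (w \in q)%:R.
Proof.
rewrite mxE dq andbT; case wq: (w \in q).
  by rewrite idx_d -ltnS prednK ?idx_lt // (leq_ltn_trans _ (idx_lt wq)).
by apply/eqP; rewrite pnatr_eq0 eqb0; apply: contraFN wq => /eqP ->; exact: dq.
Qed.

Lemma colJ w : Bm w j = (w == i)%:R + (w == j)%:R.
Proof.
rewrite mxE jq andbT; case wq: (w \in q).
  rewrite idx_j leq_eqVlt ltnS leqn0 -idx_j -idx_i -!idx_inj ?iq ?jq //.
  case: (w =P i) => [->|]; first by rewrite (negbTE ij) addr0.
  by rewrite orbF add0r.
have -> : (w == i) = false by apply: contraFF wq => /eqP ->; exact: iq.
have -> : (w == j) = false by apply: contraFF wq => /eqP ->; exact: jq.
by rewrite addr0.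
Qed.


Lemma S_iv omega v : Sig omega i v = omega i * (v \in q)%:R.
Proof.
rewrite Sig_entry; under eq_bigr => w _ do rewrite colI -mulrA.
by rewrite sum_delta' rowI.
Qed.

Lemma S_ui omega u : Sig omega u i = (u \in q)%:R * omega i.
Proof.
rewrite Sig_entry; under eq_bigr => w _ do rewrite colI.
by rewrite sum_delta rowI.
Qed.

Lemma S_out omega u v : u \notin q -> Sig omega u v = omega u * (u == v)%:R.
Proof.
move=> uq'; rewrite Sig_entry; under eq_bigr => w _ do rewrite (colOut u w uq') -mulrA.
by rewrite sum_delta' rowOut.
Qed.

Lemma S_out2 omega u v : v \notin q -> Sig omega u v = (v == u)%:R * omega v.
Proof.
move=> vq'; rewrite Sig_entry; under eq_bigr => w _ do rewrite (colOut v w vq').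
by rewrite sum_delta rowOut.
Qed.

Definition Sd (omega : 'I_n -> R) := \sum_w omega w * (w \in q)%:R.

Lemma S_dj omega : Sig omega d j = omega i + omega j.
Proof.
rewrite Sig_entry; under eq_bigr => w _ do rewrite colD colJ mulrDr.
rewrite big_split /= !sum_delta iq jq !mul1r.
by [].
Qed.

Lemma S_dd omega : Sig omega d d = Sd omega.
Proof.
rewrite Sig_entry /Sd; apply: eq_bigr => w _; rewrite !colD.
by case: (w \in q); rewrite ?mul1r ?mulr1 ?mul0r ?mulr0.
Qed.


Variable A : {set 'I_n}.
Hypothesis dA : d \in A.
Hypothesis iA : i \in A.
Hypothesis jA : j \notin A.
Hypothesis mid : forall x : 'I_n, x \in p -> x \in A -> x = d.

Lemma qA {x : 'I_n} : x \in q -> x \in A -> x = i \/ x = d.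
Proof.
rewrite /q !inE => /orP [/eqP -> | /orP [/eqP -> | xp]] xA; first by left.
  by move: jA; rewrite xA.
by right; exact: mid.
Qed.

Lemma riA (a : 'I_(#|A :\ i|.+1)) : nth i (i :: enum (A :\ i)) a \in A.
Proof.
case: a => [[|k] ha] //=.
have : nth i (enum (A :\ i)) k \in enum (A :\ i) by rewrite mem_nth // -cardE.
by rewrite mem_enum => /setD1P [].
Qed.

Lemma rjA (b : 'I_(#|A :\ i|.+1)) : b != ord0 -> nth j (j :: enum (A :\ i)) b \in A.
Proof.
case: b => [[|k] hb] //= _.
have : nth j (enum (A :\ i)) k \in enum (A :\ i) by rewrite mem_nth // -cardE.
by rewrite mem_enum => /setD1P [].
Qed.

Lemma dK : d \in A :\ i.
Proof. by apply/setD1P; split => //; exact: di. Qed.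

Lemma agree (w1 w2 : 'I_n -> R) : w1 i = w2 i ->
  (forall u, u \notin q -> w1 u = w2 u) -> Sd w1 = Sd w2 ->
  forall u v, u \in A -> v \in A -> Sig w1 u v = Sig w2 u v.
Proof.
move=> hi hout hS u v uA vA.
case uq': (u \in q); last by rewrite !S_out ?uq' // hout ?uq'.
case vq': (v \in q); last by rewrite !S_out2 ?vq' // hout ?vq'.
case: (qA uq' uA) => ->; first by rewrite !S_iv hi.
case: (qA vq' vA) => ->; first by rewrite !S_ui hi.
by rewrite !S_dd.
Qed.

Definition X (w : 'I_n -> R) :=
  \det (Fm (Sig w) i j (A :\ i) (colv (Sig w) i (A :\ i) i)).
Definition Y (w : 'I_n -> R) := \det (subPrinc (Sig w) A).

Lemma XY_agree (w1 w2 : 'I_n -> R) : w1 i = w2 i ->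
  (forall u, u \notin q -> w1 u = w2 u) -> Sd w1 = Sd w2 ->
  X w1 = X w2 /\ Y w1 = Y w2.
Proof.
move=> hi hout hS; have ag := agree w1 w2 hi hout hS.
split; congr (\det _); apply/matrixP => a b; rewrite !mxE.
  case: eqP => [_|/eqP hb]; first by rewrite ag ?riA ?iA.
  by rewrite ag ?riA ?rjA.
by rewrite ag ?enum_valP.
Qed.

Lemma decomp (w : 'I_n -> R) : w i = 1 -> Sd w - 1 != 0 ->
  colv (Sig w) i (A :\ i) j =
  (1 - w j / (Sd w - 1)) *: colv (Sig w) i (A :\ i) i +
  (w j / (Sd w - 1)) *: colv (Sig w) i (A :\ i) d.
Proof.
move=> hi hs; apply/matrixP => a b; rewrite !mxE.
have rA := riA a; set r := nth i _ a in rA *.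
case rq: (r \in q).
  case: (qA rq rA) => ->.
    by rewrite !S_iv jq iq dq hi; field.
  by rewrite S_dj S_ui S_dd dq hi /= mul1r; field; exact: hs.
have hr : r \notin q by rewrite rq.
rewrite !S_out //.
have -> : (r == j) = false by apply: contraFF rq => /eqP ->; exact: jq.
have -> : (r == i) = false by apply: contraFF rq => /eqP ->; exact: iq.
have -> : (r == d) = false by apply: contraFF rq => /eqP ->; exact: dq.
by rewrite !mulr0 addr0.
Qed.

Lemma lam_form (w : 'I_n -> R) : w i = 1 -> Sd w - 1 != 0 ->
  lamA i j A (Sig w) = (1 - w j / (Sd w - 1)) * (X w / Y w).
Proof.
move=> hi hs; rewrite /lamA subCond_Fm decomp // Fm_lin (@Fm_zero R n (Sig w) i j (A :\ i) d dK).
by rewrite mulr0 addr0 mulrA.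
Qed.


Lemma chain_final :
  (forall (omega : 'I_n -> R) (L : 'M[R]_n),
      (forall k, 0 < omega k) ->
      (forall k l, ~~ e k l -> L k l = 0) ->
      lamA i j A (phiG omega L) = L i j) -> False.
Proof.
move=> Hid.
pose w1 := fun w : 'I_n => if w == d then 2 else 1 : R.
pose w2 := fun w : 'I_n => if w == j then 2 else 1 : R.
have p1 : forall k, 0 < w1 k by move=> k; rewrite /w1; case: ifP.
have p2 : forall k, 0 < w2 k by move=> k; rewrite /w2; case: ifP.
have h1 := Hid w1 Lm p1 Lm_valid.
have h2 := Hid w2 Lm p2 Lm_valid.
rewrite -SigE Lm_ij in h1; rewrite -SigE Lm_ij in h2.
have w1i : w1 i = 1 by rewrite /w1 eq_sym (negbTE di).
have w2i : w2 i = 1 by rewrite /w2 (negbTE ij).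
have w1j : w1 j = 1 by rewrite /w1 eq_sym (negbTE dj).
have w2j : w2 j = 2 by rewrite /w2 eqxx.
have hout : forall u, u \notin q -> w1 u = w2 u.
  move=> u uq'; rewrite /w1 /w2.
  have -> : (u == d) = false by apply: contraNF uq' => /eqP ->; exact: dq.
  have -> : (u == j) = false by apply: contraNF uq' => /eqP ->; exact: jq.
  by [].
have hS : Sd w1 = Sd w2.
  apply/eqP; rewrite -subr_eq0 /Sd -sumrB.
  under eq_bigr => w _ do rewrite -mulrBl.
  have -> : \sum_w (w1 w - w2 w) * (w \in q)%:R =
            \sum_w ((w \in q)%:R * (w == d)%:R - (w \in q)%:R * (w == j)%:R).
    apply: eq_bigr => w _; rewrite /w1 /w2.
    case: (w =P d) => [->|nd]; first by rewrite (negbTE dj) dq /=; ring.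
    case: (w =P j) => [->|nj]; first by rewrite jq /=; ring.
    by rewrite subrr mul0r !mulr0 subrr.
  by rewrite sumrB !sum_delta dq jq subrr.
have hS3 : 3 <= Sd w1.
  have : \sum_w ((1 : R) * (w == i)%:R + 2 * (w == d)%:R) <= Sd w1.
    apply: ler_sum => w _; rewrite /w1.
    have id : (i == d) = false by rewrite eq_sym (negbTE di).
    case: (w =P i) => [->|_]; first by rewrite id iq /=; lra.
    case wd: (w == d).
      have wq : w \in q by rewrite (eqP wd) dq.
      by rewrite wq /=; lra.
    by rewrite /= !mulr0 addr0 mul1r ler0n.
  by rewrite big_split /= !sum_delta; lra.
have hs1 : Sd w1 - 1 != 0 by apply/eqP; lra.
have hs2 : Sd w2 - 1 != 0 by rewrite -hS.
rewrite lam_form // in h1; rewrite lam_form // in h2.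
have [hX hY] := XY_agree w1 w2 (etrans w1i (esym w2i)) hout hS.
rewrite -hS -hX -hY w2j in h2; rewrite w1j in h1.
set z := X w1 / Y w1 in h1 h2.
set c := (Sd w1 - 1)^-1 in h1 h2.
have c0 : 0 < c by rewrite invr_gt0; lra.
rewrite mul1r in h1.
have hz : z = 1 by lra.
rewrite hz in h1; lra.
Qed.

End Chain.


Lemma lamA_scale (R : fieldType) n (i j : 'I_n) (A : {set 'I_n}) (a : R) S :
  i \notin A -> a != 0 -> lamA i j A (a *: S) = a * lamA i j A S.
Proof.
move=> iA a0; rewrite /lamA.
have -> : subCond (a *: S) i j (A :\ i) = a *: subCond S i j (A :\ i).
  by apply/matrixP => u v; rewrite !mxE.
have -> : subPrinc (a *: S) A = a *: subPrinc S A.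
  by apply/matrixP => u v; rewrite !mxE.
rewrite !detZ.
have hc : #|A| = #|A :\ i| by rewrite (cardsD1 i A) (negbTE iA).
have -> : a ^+ #|A| = a ^+ #|A :\ i| by rewrite -hc.
rewrite exprS invfM !mulrA; congr (_ * _); rewrite -!mulrA; congr (_ * _).
by rewrite mulrA mulrC !mulrA mulVf ?mul1r ?expf_neq0.
Qed.

Definition Eij {n} (i j : 'I_n) (R : ringType) : 'M[R]_n :=
  \matrix_(u, v) ((u == i) && (v == j))%:R.

Lemma Eij_valid n (e : rel 'I_n) (R : ringType) i j : e i j ->
  forall k l, ~~ e k l -> Eij i j R k l = 0.
Proof.
move=> eij k l; rewrite mxE; case: (k =P i) => [-> | //]; case: (l =P j) => [-> | //].
by rewrite eij.
Qed.

Lemma dag_neq n (e : rel 'I_n) i j : is_dag e -> e i j -> i != j.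
Proof.
move=> dag eij; apply/eqP => ij; subst j; have := dag i.
by rewrite /de inE; case/existsP; exists i; rewrite eij connect0.
Qed.

Lemma chain_contra (R : realType) n (e : rel 'I_n) (i j : 'I_n) (p : seq 'I_n)
  (A : {set 'I_n}) :
  path e i (j :: p) -> uniq (i :: j :: p) -> last j p \in A -> i \in A ->
  j \notin A -> (forall x, x \in p -> x \in A -> x = last j p) ->
  (forall (omega : 'I_n -> R) (L : 'M[R]_n),
      (forall k, 0 < omega k) ->
      (forall k l, ~~ e k l -> L k l = 0) ->
      lamA i j A (phiG omega L) = L i j) -> False.
Proof.
move=> pth uq dA iA jA mid Hid.
have dj : last j p != j by apply: contraNneq jA => <-.
exact: (@chain_final R n e i j p pth uq dj A dA iA jA mid Hid).
Qed.

Theorem mainTheorem2 (R : realType) (n : nat) (e : rel 'I_n)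
  (Hdag : is_dag e) (i j : 'I_n) (Hij : e i j) (A : {set 'I_n})
  (Hident : forall (omega : 'I_n -> R) (L : 'M[R]_n),
      (forall k, 0 < omega k) ->
      (forall k l, ~~ e k l -> L k l = 0) ->
      lamA i j A (phiG omega L) = L i j) :
  i \in A /\ A \subset ~: debar e j.
Proof.
have Ev := @Eij_valid n e R i j Hij.
have E1 : Eij i j R i j = 1 :> R by rewrite mxE !eqxx.
have ij := @dag_neq n e i j Hdag Hij.
have iA : i \in A.
  apply/negPn/negP => iA.
  have h1 := Hident (fun _ => 1) (Eij i j R) (fun _ => ltr01) Ev.
  have h2 := Hident (fun _ => 2 * 1) (Eij i j R) (fun _ => ltac:(by rewrite mulr1)) Ev.
  rewrite (@phiG_scale R n 2 (fun _ => 1)) lamA_scale // ?h1 ?E1 in h2.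
    by move: h2; rewrite mulr1; lra.
  by rewrite pnatr_eq0.
have jA : j \notin A.
  apply/negP => jA.
  have h3 := Hident (fun _ => 1) (Eij i j R) (fun _ => ltr01) Ev.
  rewrite /lamA subCond_Fm Fm_zero ?mul0r ?E1 in h3.
    by move: h3; lra.
  by rewrite !inE eq_sym ij.
split => //.
apply/subsetP => a aA; rewrite !inE negb_or; apply/andP; split.
  by apply: contraNneq jA => <-.
apply/negP => ade.
have cja : connect e j a.
  move: ade => /existsP [k /andP [ejk cka]].
  exact: connect_trans (connect1 ejk) cka.
case/connectP: cja => p0 pth0 ha.
have aj : a != j by apply: contraNneq jA => <-.
move: aA aj; rewrite ha; case: (shortenP pth0) => p1 pth1 u1 _ aA aj.
have hasA : has (fun x => x \in A) p1.
  apply/hasP; exists (last j p1) => //.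
  by move: (mem_last j p1); rewrite inE (negbTE aj).
set t := find (fun x => x \in A) p1.
have tlt : (t < size p1)%N by rewrite -has_find.
set d := nth j p1 t.
have dA : d \in A by exact: nth_find.
set p := rcons (take t p1) d.
have hp : take t.+1 p1 = p by rewrite (take_nth j tlt).
have ld : last j p = d by rewrite last_rcons.
have pth : path e j p by rewrite -hp take_path.
have up : uniq (j :: p) by rewrite -hp (_ : j :: take t.+1 p1 = take t.+2 (j :: p1)) // take_uniq.
apply: (@chain_contra R n e i j p A) => //.
- by rewrite /= Hij.
- rewrite cons_uniq up andbT; apply/negP => ip.
  have := path_connect pth ip => cji.
  have := Hdag i; rewrite inE; case/negP; apply/existsP; exists j.
  by rewrite Hij cji.
- by rewrite ld.
- move=> x xp xA; rewrite ld.
  move: xp; rewrite mem_rcons inE => /orP [/eqP // | /(nthP j) [k klt xk]].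
  rewrite size_take tlt in klt.
  rewrite -xk nth_take // in xA.
  by rewrite (before_find j klt) in xA.
Qed.
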